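(* Let $0<\mu<L$, $\kappa=L/\mu$, and let $m(z)=z^n+\sum_{i=0}^{n-1}m_iz^i\in\mathbb{R}[z]$ be monic of degree $n\ge1$. Let $d(z)\in\mathbb{R}[z]$ with $\deg d<n$, and let $\rho>0$ be such that for every $\lambda\in[\mu,L]$ all roots of $m(z)-\lambda d(z)$ have modulus at most $\rho$. Then $$\rho\ \ge\ \max_{k=1,\dots,n}\Bigl(\frac{|m_{n-k}|}{\binom{n}{k}}\cdot\frac{\kappa-1}{\kappa+1}\Bigr)^{1/k}.$$
   Context: Here $m_{n-k}$ denotes the coefficient of $z^{n-k}$ in $m(z)$ (with $m_n=1$ implicitly for the leading coefficient, so that the $k=n$ term uses $m_0$). *)

(* Defs.v *)
From mathcomp Require Import all_boot all_algebra.
From mathcomp Require Import reals exp complex.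
Import GRing.Theory Num.Theory.
Local Open Scope ring_scope.

Definition cmod {R : realType} (z : R[i]) : R := Normc.normc z.

Definition cpoly {R : realType} (p : {poly R}) : {poly R[i]} :=
  map_poly (fun x : R => (x%:C)%C) p.

Definition roots_bounded_by {R : realType} (p : {poly R}) (rho : R) : Prop :=
  forall z : R[i], root (cpoly p) z -> cmod z <= rho.

(* Main.v *)
Require Import Defs.
From mathcomp Require Import all_boot all_order all_algebra.
From mathcomp Require Import ring lra.
From mathcomp Require Import reals exp complex.
Import Order.TTheory GRing.Theory Num.Theory.
Local Open Scope ring_scope.

Lemma coef_prod_bound (C : numDomainType) (s : seq C) (r : C) :
  0 <= r -> (forall z, z \in s -> `|z| <= r) ->
  forall i, `|(\prod_(z <- s) ('X - z%:P))`_i| <= 'C(size s, i)%:R * r ^+ (size s - i).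
Proof.
move=> r0; elim: s => [|z s IH] hs i.
  rewrite big_nil coef1; case: i => [|i] /=; first by rewrite normr1 expr0 mulr1.
  by rewrite normr0 bin0n mul0r.
have hz : `|z| <= r by apply: hs; rewrite inE eqxx.
have {}IH := IH (fun y hy => hs y (@mem_behead _ (z :: s) _ hy)).
rewrite big_cons mulrBl coefB coefXM coefCM /=.
case: i => [|i] /=.
  rewrite sub0r normrN normrM !bin0 mul1r subn0 exprS.
  have := IH 0%N; rewrite bin0 mul1r subn0 => h.
  by apply: ler_pM => //.
rewrite binS natrD mulrDl subSS addrC.
apply: (le_trans (ler_normD _ _)); rewrite normrN; apply: lerD; last exact: IH.
rewrite normrM.
case: (ltnP i (size s)) => his.
  have -> : (size s - i = (size s - i.+1).+1)%N by rewrite subnSK.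
  rewrite exprS mulrCA; apply: ler_pM => //; exact: IH.
have := IH i.+1; rewrite bin_small ?ltnS // mul0r normr_le0 => /eqP ->.
by rewrite normr0 mulr0 mul0r.
Qed.

Lemma norm_realC (R : realType) (x : R) : `|(x%:C)%C| = (`|x|%:C)%C.
Proof. by rewrite normc_def /= expr0n /= addr0 sqrtr_sqr. Qed.

Lemma vieta_bound (R : realType) (p : {poly R}) (n : nat) (rho : R) :
  p \is monic -> size p = n.+1 -> 0 <= rho -> roots_bounded_by p rho ->
  forall k, (k <= n)%N -> `|p`_(n - k)| <= 'C(n, k)%:R * rho ^+ k.
Proof.
move=> pm sp r0 hb k kn.
have [r Hr] := closed_field_poly_normal (cpoly p).
have lq : lead_coef (cpoly p) = 1.
  by rewrite /cpoly lead_coef_map /= (monicP pm).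
rewrite lq scale1r in Hr.
have sr : size r = n.
  have := size_map_poly (real_complex R) p.
  rewrite -/(cpoly p) Hr size_prod_XsubC sp; by case.
have hz : forall z, z \in r -> `|z| <= (rho%:C)%C.
  move=> z zr; have : root (cpoly p) z by rewrite Hr root_prod_XsubC.
  move/hb => h; change ((Normc.normc z)%:C <= (rho%:C))%C; by rewrite lecR.
have h := @coef_prod_bound _ r (rho%:C)%C _ hz (n - k).
rewrite -Hr sr subKn // bin_sub // /cpoly coef_map /= norm_realC in h.
rewrite -lecR rmorphM rmorphXn rmorph_nat /=; apply: h.
by rewrite lecR.
Qed.
Lemma num_step (R : realType) (mu L a b B c : R) :
  0 < mu -> mu < L -> 0 < c ->
  `|a - mu * b| <= B -> `|a - L * b| <= B ->
  `|a| / c * ((L / mu - 1) / (L / mu + 1)) <= B / c.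
Proof.
move=> m0 mL c0 h1 h2.
have L0 : 0 < L by apply: lt_trans mL.
have -> : (L / mu - 1) / (L / mu + 1) = (L - mu) / (L + mu).
  field; apply/andP; split; rewrite ?lt0r_neq0 //; lra.
rewrite mulrAC ler_pM2r ?invr_gt0 // mulrA ler_pdivrMr ?addr_gt0 //.
move: h1 h2; rewrite !ler_norml => /andP[h1 h1'] /andP[h2 h2'].
case: (lerP 0 a) => ha; [rewrite ger0_norm // | rewrite ltr0_norm //]; nra.
Qed.

Lemma pow_step (R : realType) (x rho : R) (k : nat) :
  (0 < k)%N -> 0 <= x -> x <= rho ^+ k -> 0 <= rho -> powR x (k%:R)^-1 <= rho.
Proof.
move=> k0 x0 xr r0.
have -> : rho = powR (rho ^+ k) (k%:R)^-1.
  rewrite -powR_mulrn // -powRrM mulfV ?powRr1 // pnatr_eq0 -lt0n //.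
apply: ge0_ler_powR => //; rewrite ?invr_ge0 ?ler0n //.
by rewrite qualifE /= exprn_ge0.
Qed.

Theorem mainTheorem5 (R : realType) (mu L : R) (n : nat)
    (m d : {poly R}) (rho : R) :
  0 < mu -> mu < L ->
  (1 <= n)%N ->
  m \is monic -> size m = n.+1 ->
  (size d < size m)%N ->
  0 < rho ->
  (forall lambda : R, mu <= lambda <= L ->
     roots_bounded_by (m - lambda *: d) rho) ->
  let kappa := L / mu in
  \big[Num.max/0]_(1 <= k < n.+1)
     powR (`|m`_(n - k)| / 'C(n, k)%:R * ((kappa - 1) / (kappa + 1)))
          (k%:R)^-1
  <= rho.
Proof.
move=> m0 mL n1 mm sm sd r0 hb; rewrite [is_true _]/=; set kappa := L / mu.
have key : forall lambda, mu <= lambda <= L -> forall k, (k <= n)%N ->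
    `|m`_(n - k) - lambda * d`_(n - k)| <= 'C(n, k)%:R * rho ^+ k.
  move=> lambda hl k kn.
  have sz : (size (- (lambda *: d)) < size m)%N.
    by rewrite size_polyN (leq_ltn_trans (size_scale_leq _ _)).
  have hm : m - lambda *: d \is monic.
    by rewrite monicE lead_coefDl // (monicP mm).
  have hs : size (m - lambda *: d) = n.+1 by rewrite size_polyDl.
  have := @vieta_bound R (m - lambda *: d) n rho hm hs (ltW r0) (hb _ hl) k kn.
  by rewrite coefB coefZ.
rewrite big_nat_cond; apply: (big_ind (fun x => x <= rho)); first exact: ltW.
  by move=> x y hx hy; rewrite ge_max hx hy.
move=> k /andP[/andP[k1 kn] _]; rewrite ltnS in kn.
have c0 : 0 < ('C(n, k)%:R : R) by rewrite ltr0n bin_gt0.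
apply: pow_step => //; last exact: ltW.
  apply: mulr_ge0; first by apply: divr_ge0; rewrite ?normr_ge0 ?ler0n.
  have L0 : 0 < L by apply: lt_trans mL.
  have k1' : 1 <= kappa by rewrite /kappa ler_pdivlMr // mul1r ltW.
  by apply: divr_ge0; rewrite ?subr_ge0 // addr_ge0 // (le_trans ler01).
have h1 : mu <= mu <= L by rewrite lexx ltW.
have h2 : mu <= L <= L by rewrite lexx ltW.
have := @num_step R mu L _ _ _ _ m0 mL c0 (key mu h1 k kn) (key L h2 k kn).
move/le_trans; apply.
rewrite [X in X <= _]mulrC mulKf ?lt0r_neq0 //.
Qed.
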